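(* For every integer $m\ge 5$, the independence polynomial $I(T_{m,2};t)$ is unimodal and its mode belongs to $\{\rho_m,\rho_m+1\}$, where $\rho_m$ denotes the mode of the independence polynomial $I(C_m;t)$ of the cycle $C_m$.
   Context: For a simple graph $G$, the independence polynomial is $I(G;t)=\sum_{k\ge 0}s_k(G)t^k$, where $s_k(G)$ is the number of independent sets (sets of pairwise non-adjacent vertices) of size $k$ in $G$. $C_m$ is the cycle on $m$ vertices; its independence polynomial is known to be unimodal. For integers $m\ge 3$, $n\ge 1$, the tadpole graph $T_{m,n}$ is the simple graph with vertex set $\{x_1,\dots,x_m,y_1,\dots,y_n\}$ and edges $\{x_i,x_{i+1}\}$ for $1\le i\le m-1$, $\{x_m,x_1\}$, $\{y_j,y_{j+1}\}$ for $1\le j\le n-1$, and $\{x_m,y_1\}$. A polynomial $\sum a_kt^k$ with nonnegative coefficients is unimodal if $a_0\le\cdots\le a_m\ge a_{m+1}\ge\cdots$ for some $m$; with $a_{-1}=0$, its mode is the unique $i$ with $a_{i-1}<a_i\ge a_{i+1}\ge a_{i+2}\ge\cdots$. *)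

(* Defs.v *)
From mathcomp Require Import all_boot.
Set Implicit Arguments. Unset Strict Implicit. Unset Printing Implicit Defensive.

(* A simple graph is given by a (symmetric, irreflexive) adjacency relation
   on a finite vertex type. *)
Definition independent (T : finType) (adj : rel T) (S : {set T}) : bool :=
  [forall x in S, forall y in S, ~~ adj x y].

(* s_k(G): number of independent sets of size k. These are the coefficients
   of the independence polynomial I(G;t) = sum_k s_k(G) t^k. *)
Definition indep_coef (T : finType) (adj : rel T) (k : nat) : nat :=
  #|[set S : {set T} | independent adj S && (#|S| == k)]|.

Definition unimodal (a : nat -> nat) : Prop :=
  exists m, (forall i, i < m -> a i <= a i.+1) /\ (forall i, m <= i -> a i.+1 <= a i).

Definition is_mode (a : nat -> nat) (i : nat) : Prop :=
  (if i is j.+1 then a j < a i else 0 < a 0) /\ (forall j, i <= j -> a j.+1 <= a j).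

(* Cycle C_m on vertices x_1..x_m encoded as 0..m-1. *)
Definition cycle_edge (m : nat) (a b : nat) : bool :=
  ((a.+1 == b) && (b < m)) || ((a == m.-1) && (b == 0)).
Definition cycle_adj (m : nat) : rel 'I_m :=
  fun u v => cycle_edge m u v || cycle_edge m v u.

(* Tadpole T_{m,n}: x_1..x_m encoded as 0..m-1, y_1..y_n as m..m+n-1.
   Edges: x_i x_{i+1}, x_m x_1, y_j y_{j+1}, x_m y_1. *)
Definition tadpole_edge (m n : nat) (a b : nat) : bool :=
  [|| (a.+1 == b) && (b < m),
      (a == m.-1) && (b == 0),
      [&& m <= a, a.+1 == b & b < m + n]
    | (a == m.-1) && (b == m) && (0 < n)].
Definition tadpole_adj (m n : nat) : rel 'I_(m + n) :=
  fun u v => tadpole_edge m n u v || tadpole_edge m n v u.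
Arguments cycle_adj m : clear implicits.
Arguments tadpole_adj m n : clear implicits.

(* Main.v *)
Require Import Defs.
From mathcomp Require Import all_boot all_algebra zify ring.
Set Implicit Arguments. Unset Strict Implicit. Unset Printing Implicit Defensive.

Fixpoint nc (s : seq bool) : bool :=
  if s is b :: t then ~~ (b && head false t) && nc t else true.

Fixpoint allseqs n : seq (seq bool) :=
  if n is n'.+1 then map (cons false) (allseqs n') ++ map (cons true) (allseqs n')
  else [:: [::]].

Lemma mem_allseqs n s : (s \in allseqs n) = (size s == n).
Proof.
elim: n s => [|n IH] s; first by case: s.
case: s => [|b s] /=; first by rewrite mem_cat; apply/negP => /orP [] /mapP [].
rewrite mem_cat eqSS; case: b.
- rewrite (mem_map (fun x y => _)); last by move=> ??[].
  rewrite IH; apply/orP/idP => [[|//]|->]; last by right.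
  by case/mapP=> t _.
- rewrite (mem_map (fun x y => _)); last by move=> ??[].
  rewrite IH; apply/orP/idP => [[//|]|->]; last by left.
  by case/mapP=> t _.
Qed.

Lemma uniq_allseqs n : uniq (allseqs n).
Proof.
elim: n => //= n IH; rewrite cat_uniq !map_inj_uniq //; try by move=> ??[].
rewrite IH /= andbT; apply/hasPn => s /mapP [t _ ->]; apply/mapP => [[u _]] //.
Qed.

Lemma count_rev_allseqs n (P : pred (seq bool)) :
  count P (allseqs n) = count (fun s => P (rev s)) (allseqs n).
Proof.
rewrite -(count_map rev); apply/esym; move: P; apply/permP/uniq_perm.
- by rewrite map_inj_uniq ?uniq_allseqs //; exact: (can_inj revK).
- exact: uniq_allseqs.
move=> s; rewrite mem_allseqs; apply/mapP/idP => [[t]|/eqP Hs].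
  by rewrite mem_allseqs => Ht ->; rewrite size_rev.
by exists (rev s); rewrite ?revK // mem_allseqs size_rev Hs.
Qed.

Lemma count_false (T : eqType) (s : seq T) : count (fun _ => false) s = 0.
Proof. by elim: s. Qed.

Lemma nc_nth s : reflect (forall i, ~~ (nth false s i && nth false s i.+1)) (nc s).
Proof.
elim: s => [|b s IH] /=; first by constructor => i; rewrite nth_nil.
apply: (iffP andP) => [[H1 /IH H2] [|i]|H]; first by case: s IH H1 {H2} => [|c s] //.
  exact: H2.
split; first by move: (H 0); case: s {IH H}.
by apply/IH => i; exact: (H i.+1).
Qed.

Lemma count_allS n (P : pred (seq bool)) :
  count P (allseqs n.+1) = count (fun s => P (false :: s)) (allseqs n) + count (fun s => P (true :: s)) (allseqs n).
Proof. by rewrite /= count_cat !count_map. Qed.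

Definition Pc n k := count (fun s => nc s && (count id s == k)) (allseqs n).

Lemma Pc0 k : Pc 0 k = (k == 0).
Proof. by rewrite /Pc /=; case: k. Qed.

Lemma Pc1 k : Pc 1 k = (k <= 1).
Proof. by rewrite /Pc /=; case: k => [|[]]. Qed.

Lemma PcSS n k : Pc n.+2 k.+1 = Pc n.+1 k.+1 + Pc n k.
Proof.
rewrite /Pc count_allS; congr (_ + _).
rewrite count_allS /= count_false addn0.
by apply: eq_count => s /=; rewrite (add1n (count id s)) eqSS.
Qed.

Lemma Pc_k0 n : Pc n 0 = 1.
Proof.
elim: n => // n IH; rewrite /Pc count_allS -[1]addn0 -{1}IH; congr (_ + _).
by rewrite (eq_count (a2 := fun _ => false)) ?count_false // => s /=; rewrite addn_eq0 /= !andbF.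
Qed.

Lemma Pc_closed n k : Pc n k = 'C(n.+1 - k, k).
Proof.
elim: n {-2}n (leqnn n) k => [|N IH] n Hn k.
  by move: Hn; rewrite leqn0 => /eqP ->; rewrite Pc0; case: k.
case: n Hn => [|[|n]] Hn; first by rewrite Pc0; case: k.
  by rewrite Pc1; case: k => [|[]].
case: k => [|k].
  by rewrite Pc_k0 bin0.
rewrite PcSS !IH //; try lia.
have -> : n.+2 - k.+1 = n.+1 - k by lia.
case: (leqP k n.+1) => Hk.
  have -> : n.+3 - k.+1 = (n.+1 - k).+1 by lia.
  by rewrite binS addnC.
have -> : n.+3 - k.+1 = 0 by lia.
have -> : n.+1 - k = 0 by lia.
by rewrite !bin0n; case: k Hk.
Qed.

Definition enc N (S : {set 'I_N}) : seq bool := mkseq (fun i => [exists x in S, val x == i]) N.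

Lemma size_enc N (S : {set 'I_N}) : size (enc S) = N.
Proof. by rewrite size_mkseq. Qed.

Lemma nth_enc N (S : {set 'I_N}) i : nth false (enc S) i = [exists x in S, val x == i].
Proof.
case: (ltnP i N) => Hi; first by rewrite nth_mkseq.
rewrite nth_default ?size_enc //; apply/esym/existsP => [[x /andP [_ /eqP Hx]]].
by move: (ltn_ord x); rewrite Hx ltnNge Hi.
Qed.

Lemma nth_enc_ord N (S : {set 'I_N}) (x : 'I_N) : nth false (enc S) x = (x \in S).
Proof.
rewrite nth_enc; apply/existsP/idP => [[y /andP [Hy /eqP /val_inj <-]] //|Hx].
by exists x; rewrite Hx eqxx.
Qed.

Lemma enc_inj N : injective (@enc N).
Proof.
move=> S1 S2 H; apply/setP => x; by rewrite -!nth_enc_ord H.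
Qed.

Lemma enc_surj N s : size s = N -> enc [set x : 'I_N | nth false s x] = s.
Proof.
move=> Hs; apply: (@eq_from_nth _ false); first by rewrite size_enc Hs.
move=> i; rewrite size_enc => Hi; rewrite nth_enc.
apply/existsP/idP => [[y /andP [] ]|H].
  by rewrite inE => Hy /eqP <-.
by exists (Ordinal Hi); rewrite inE H eqxx.
Qed.

Lemma card_enc N (S : {set 'I_N}) : #|S| = count id (enc S).
Proof.
rewrite /enc /mkseq count_map -sum1_count -sum1_card big_mkcond /=.
have -> : iota 0 N = index_iota 0 N by rewrite /index_iota subn0.
rewrite [RHS]big_mkcond /= big_mkord.
by apply: eq_bigr => x _; rewrite -nth_enc nth_enc_ord.
Qed.

Lemma card_sets N (P : pred (seq bool)) :
  #|[set S : {set 'I_N} | P (enc S)]| = count P (allseqs N).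
Proof.
rewrite cardE -(size_map (@enc N)) -size_filter; apply: perm_size; apply: uniq_perm.
- by rewrite map_inj_uniq ?enum_uniq //; apply: enc_inj.
- by rewrite filter_uniq ?uniq_allseqs.
move=> s; rewrite mem_filter mem_allseqs; apply/mapP/andP => [[S]|[Ps /eqP Hs]].
  by rewrite mem_enum inE => HP ->; rewrite size_enc.
by exists [set x : 'I_N | nth false s x]; rewrite ?enc_surj // mem_enum inE enc_surj.
Qed.

Definition E N e (a b : nat) := ((a.+1 == b) && (b < N)) || ((a == e) && (b == 0)).

Lemma indep_enc N e (adj : rel 'I_N) : e < N ->
  (forall x y : 'I_N, adj x y = E N e x y || E N e y x) ->
  forall S, independent adj S = nc (enc S) && ~~ (nth false (enc S) 0 && nth false (enc S) e).
Proof.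
move=> He Hadj S; apply/forall_inP/andP => [H|[/nc_nth H1 H2] x Hx].
  split.
    apply/nc_nth => i; rewrite !nth_enc; apply/negP => /andP [/exists_inP [x Hx /eqP Hxi] /exists_inP [y Hy /eqP Hyi]].
    move/forall_inP: (H x Hx) => /(_ y Hy); rewrite Hadj /E Hxi Hyi eqxx -Hyi ltn_ord.
    by [].
  rewrite !nth_enc; apply/negP => /andP [/exists_inP [x Hx /eqP Hxi] /exists_inP [y Hy /eqP Hyi]].
  move/forall_inP: (H y Hy) => /(_ x Hx); rewrite Hadj /E Hxi Hyi !eqxx /=.
  by [].
apply/forall_inP => y Hy; rewrite Hadj /E; apply/negP => /orP [] /orP [] /andP [/eqP H3 H4].
- by move: (H1 x); rewrite H3 !nth_enc_ord Hx Hy.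
- by move: H2; rewrite -(eqP H4) -H3 !nth_enc_ord Hx Hy.
- by move: (H1 y); rewrite H3 !nth_enc_ord Hx Hy.
- by move: H2; rewrite -(eqP H4) -H3 !nth_enc_ord Hx Hy.
Qed.


Lemma nc_rcons s b : nc (rcons s b) = nc s && ~~ (last false s && b).
Proof.
elim: s => [|a t IH] /=; first by case: b.
rewrite IH; case: t IH => [|c t] IH /=; first by clear IH; case: a; case: b.
by rewrite andbA.
Qed.

Lemma last_rev_head (s : seq bool) : last false (rev s) = head false s.
Proof. by case: s => //= a s; rewrite rev_cons last_rcons. Qed.

Lemma nc_rev s : nc (rev s) = nc s.
Proof.
elim: s => //= b s IH; rewrite rev_cons nc_rcons IH last_rev_head.
by case: b; case: (head false s); case: (nc s).
Qed.

Definition Qc n k (s : seq bool) := nc s && ~~ (nth false s 0 && nth false s n.+2) && (count id s == k).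

Lemma cyc_count n k : indep_coef (cycle_adj n.+3) k = count (Qc n k) (allseqs n.+3).
Proof.
rewrite /indep_coef -card_sets; apply: eq_card => S; rewrite !inE.
by rewrite (@indep_enc _ n.+2) // card_enc.
Qed.

Lemma tad_count n k : indep_coef (tadpole_adj n.+3 2) k =
  count (fun s => nc s && ~~ (nth false s 0 && nth false s n.+2) && (count id s == k)) (allseqs n.+3.+2).
Proof.
rewrite /indep_coef.
have -> : n.+3.+2 = n.+3 + 2 by rewrite addn2.
rewrite -card_sets; apply: eq_card => S; rewrite !inE.
rewrite (@indep_enc _ n.+2) ?card_enc //; first by lia.
move=> x y; rewrite /tadpole_adj /tadpole_edge /E.
congr (_ || _); lia.
Qed.

Lemma count_allS' n (P : pred (seq bool)) :
  count P (allseqs n.+1) = count (fun s => P (false :: s)) (allseqs n) + count (fun s => P (true :: s)) (allseqs n).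
Proof. exact: count_allS. Qed.

Lemma lastfalse n k : count (fun t => nc t && ~~ nth false t n && (count id t == k)) (allseqs n.+1) = Pc n k.
Proof.
rewrite count_rev_allseqs.
rewrite (eq_in_count (a2 := fun t => nc t && ~~ nth false t 0 && (count id t == k))); last first.
  move=> t; rewrite mem_allseqs => /eqP Ht.
  by rewrite nc_rev count_rev nth_rev ?Ht // subnn.
rewrite count_allS [X in _ + X](eq_count (a2 := fun _ => false)) ?count_false ?addn0 //; last first.
  by move=> s /=; rewrite andbF.
by apply: eq_count => s /=; rewrite andbT add0n.
Qed.

Lemma cyc_formula n k : count (Qc n k) (allseqs n.+3) = Pc n.+2 k + (if k is j.+1 then Pc n j else 0).
Proof.
rewrite /Qc count_allS; congr (_ + _).
  by apply: eq_count => s /=; rewrite andbT add0n.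
rewrite count_allS [X in _ + X](eq_count (a2 := fun _ => false)) ?count_false ?addn0; last first.
  by move=> s /=.
case: k => [|j].
  by rewrite (eq_count (a2 := fun _ => false)) ?count_false // => s /=; rewrite add0n add1n andbF.
rewrite -lastfalse; apply: eq_count => s /=.
by rewrite add0n add1n eqSS.
Qed.

Lemma tad_formula n k :
  count (fun s => nc s && ~~ (nth false s 0 && nth false s n.+2) && (count id s == k)) (allseqs n.+3.+2)
  = count (Qc n k) (allseqs n.+3) + (if k is j.+1 then Pc n.+2 j + count (Qc n j) (allseqs n.+3) else 0).
Proof.
rewrite count_rev_allseqs.
rewrite (eq_in_count (a2 := fun t => nc t && ~~ (nth false t n.+4 && nth false t 2) && (count id t == k))); last first.
  move=> t; rewrite mem_allseqs => /eqP Ht.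
  rewrite nc_rev count_rev !nth_rev ?Ht; try lia.
  have -> : n.+3.+2 - n.+3 = 2 by lia.
  by rewrite andbC (andbC (nth false t _)).
rewrite [LHS](count_allS n.+4) [X in X + _ = _](count_allS n.+3) [X in _ + X = _](count_allS n.+3).
rewrite [X in _ + (_ + X)](eq_count (a2 := fun _ => false)) ?count_false ?addn0 //.
rewrite -addnA; congr (_ + _).
  apply: eq_count => s; rewrite /Qc /= !add0n.
  by case: (nth false s 0); case: (nth false s n.+2); rewrite ?andbT ?andbF.
case: k => [|j].
  rewrite !(eq_count (a2 := fun _ => false)) ?count_false // => s /=;
  by rewrite ?add0n ?add1n andbF.
congr (_ + _).
  rewrite count_allS [X in _ + X](eq_count (a2 := fun _ => false)) ?count_false ?addn0 //.
  by apply: eq_count => u /=; rewrite !add0n add1n eqSS andbF andbT.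
apply: eq_count => u; rewrite /Qc /= add0n add1n eqSS.
by case: (nth false u 0); case: (nth false u n.+2); rewrite ?andbT ?andbF.
Qed.

Definition p n j := 'C(n.+3 - j, j).
Definition c n j := 'C(n.+3 - j, j) + (if j is i.+1 then 'C(n.+1 - i, i) else 0).
Definition f n j := (n.+3 - j.*2) * (n.+2 - j.*2).
Definition g n j := j.+1 * (n.+2 - j).

Lemma I2 n j : (n.+3 - j) * c n j = n.+3 * p n j.
Proof.
case: j => [|i]; first by rewrite /c /p subn0 bin0 addn0.
rewrite /c /p subSS.
case: (leqP i n.+1) => Hi.
  have -> : n.+2 - i = (n.+1 - i).+1 by lia.
  have H := mul_bin_diag (n.+1 - i).+1 i; rewrite /= in H.
  rewrite mulnDr H -mulnDl; congr (_ * _); lia.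
have -> : n.+2 - i = 0 by lia.
by rewrite mul0n bin0n muln0.
Qed.

Lemma I1 n j : j.+1 * (n.+3 - j) * p n j.+1 = f n j * p n j.
Proof.
rewrite /p /f subSS.
case: (leqP j n.+2) => Hj.
  have -> : n.+3 - j = (n.+2 - j).+1 by lia.
  have -> : n.+3 - j.*2 = (n.+2 - j).+1 - j by lia.
  have -> : n.+2 - j.*2 = (n.+2 - j) - j by lia.
  set a := n.+2 - j.
  have H1 := mul_bin_diag a j.
  have H2 := mul_bin_down a j.
  have H3 := mul_bin_down a.+1 j; rewrite /= in H3.
  transitivity (a.+1 * (j.+1 * 'C(a, j.+1))); first by ring.
  rewrite -H1 H2.
  transitivity ((a - j) * (a.+1 * 'C(a, j))); first by ring.
  rewrite H3; ring.
have -> : n.+2 - j = 0 by lia.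
have -> : n.+3 - j.*2 = 0 by lia.
by rewrite bin0n muln0 !mul0n.
Qed.

Lemma K n j : (n.+3 - j) * (n.+2 - j) * j.+1 * c n j.+1 = f n j * ((n.+3 - j) * c n j).
Proof.
have H2 := I2 n j.+1; rewrite subSS in H2.
have H1 := I1 n j.
rewrite I2.
transitivity ((n.+3 - j) * j.+1 * ((n.+2 - j) * c n j.+1)); first by ring.
rewrite H2.
transitivity (n.+3 * (j.+1 * (n.+3 - j) * p n j.+1)); first by ring.
rewrite H1; ring.
Qed.

Lemma fg_step n j : f n j <= g n j -> f n j.+1 <= g n j.+1.
Proof.
rewrite /f /g => H.
case: (leqP n j.*2) => Hn.
  have -> : n.+2 - (j.+1).*2 = 0 by lia.
  by rewrite muln0.
have [d Hd] : exists d, n = j.*2 + d.+1 by exists (n - j.*2).-1; lia.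
subst n.
have E1 : (j.*2 + d.+1).+3 - j.*2 = d + 4 by lia.
have E2 : (j.*2 + d.+1).+2 - j.*2 = d + 3 by lia.
have E3 : (j.*2 + d.+1).+3 - (j.+1).*2 = d + 2 by lia.
have E4 : (j.*2 + d.+1).+2 - (j.+1).*2 = d + 1 by lia.
have E5 : (j.*2 + d.+1).+2 - j = j + d + 3 by lia.
have E6 : (j.*2 + d.+1).+2 - j.+1 = j + d + 2 by lia.
rewrite E1 E2 in H; rewrite E5 in H; rewrite E3 E4 E6.
nia.
Qed.

Lemma pup_arith n r j : g n r < f n r -> j < r -> j.+1 * (n.+3 - j) <= f n j.
Proof.
rewrite /g /f => H Hj.
have Hx : r.*2.+2 <= n.+3.
  case: (leqP r.*2.+2 n.+3) => // Hc.
  have E : n.+2 - r.*2 = 0 by lia.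
  by rewrite E muln0 in H.
have [y Hy] : exists y, n.+3 = r.*2 + y.+2 by exists (n.+3 - r.*2.+2); lia.
have [e He] : exists e, r = j + e.+1 by exists (r - j.+1); lia.
have E1 : n.+3 - r.*2 = y.+2 by lia.
have E2 : n.+2 - r.*2 = y.+1 by lia.
have E3 : n.+2 - r = j + e + y + 2 by lia.
have E4 : n.+3 - j = j + 2 * e + y + 4 by lia.
have E5 : n.+3 - j.*2 = 2 * e + y + 4 by lia.
have E6 : n.+2 - j.*2 = 2 * e + y + 3 by lia.
rewrite E1 E2 E3 He in H; rewrite E4 E5 E6.
have Hy2 : j + e + 1 <= y.
  case: (leqP (j + e + 1) y) => // Hc.
  have : (y.+2) * (y.+1) <= (j + e.+1).+1 * (j + e + y + 2) by nia.
  by rewrite leqNgt H.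
nia.
Qed.

Lemma rho_exists n : exists rho, [/\ 0 < rho, (forall j, j < rho -> g n j < f n j) & (forall j, rho <= j -> f n j <= g n j)].
Proof.
have exP : exists k, f n k <= g n k.
  exists n.+2; rewrite /f (_ : n.+3 - (n.+2).*2 = 0) ?mul0n //; lia.
case: (ex_minnP exP) => rho Hr Hmin; exists rho; split.
- case: rho Hr {Hmin} => // Hr; move: Hr; rewrite /f /g; nia.
- move=> j Hj; rewrite ltnNge; apply/negP => H; move: (Hmin j H); lia.
- elim=> [|j IH] Hj; first by move: Hj; rewrite leqn0 => /eqP <-.
  case: (eqVneq rho j.+1) => [<- //|Hne].
  apply: fg_step; apply: IH; lia.
Qed.

Lemma c_pos n j : g n j < f n j -> 0 < c n j.
Proof.
rewrite /g /f => H.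
have Hj : j.*2 < n.+2.
  case: (ltnP j.*2 n.+2) => // Hc; have E : n.+2 - j.*2 = 0 by lia.
  by rewrite E muln0 in H.
rewrite /c (leq_trans _ (leq_addr _ _)) // bin_gt0; lia.
Qed.

Lemma Cup n j : g n j < f n j -> c n j < c n j.+1.
Proof.
move=> H; have Hc := c_pos H.
have Hj : j.*2 < n.+2.
  move: H; rewrite /g /f; case: (ltnP j.*2 n.+2) => // Hc' H; have E : n.+2 - j.*2 = 0 by lia.
  by rewrite E muln0 in H.
have HK0 : 0 < (n.+3 - j) * (n.+2 - j) * j.+1 by rewrite !muln_gt0 andbT; apply/andP; split; rewrite subn_gt0; clear -Hj; lia.
have HX : 0 < (n.+3 - j) * c n j by rewrite muln_gt0 Hc andbT subn_gt0; clear -Hj; lia.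
have : g n j * ((n.+3 - j) * c n j) < f n j * ((n.+3 - j) * c n j) by rewrite ltn_pmul2r.
rewrite -K (_ : g n j * ((n.+3 - j) * c n j) = (n.+3 - j) * (n.+2 - j) * j.+1 * c n j); last by rewrite /g; ring.
by rewrite ltn_pmul2l.
Qed.

Lemma Cdown n j : 0 < j -> f n j <= g n j -> c n j.+1 <= c n j.
Proof.
move=> Hj0 H.
case: (leqP j n.+1) => Hj.
  have HK0 : 0 < (n.+3 - j) * (n.+2 - j) * j.+1 by rewrite !muln_gt0 andbT; apply/andP; split; rewrite subn_gt0; clear -Hj; lia.
  rewrite -(leq_pmul2l HK0) K.
  rewrite (_ : (n.+3 - j) * (n.+2 - j) * j.+1 * c n j = g n j * ((n.+3 - j) * c n j)); last by rewrite /g; ring.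
  by rewrite leq_mul2r H orbT.
have E1 : n.+2 - j = 0 by clear -Hj; lia.
have E2 : n.+1 - j = 0 by clear -Hj; lia.
rewrite /c subSS E1 E2 !bin0n.
by case: j Hj0 {H Hj E1 E2}.
Qed.

Lemma Pdown n j : f n j <= g n j -> p n j.+1 <= p n j.
Proof.
move=> H.
case: (ltnP j n.+3) => Hj.
  have HL : 0 < j.+1 * (n.+3 - j) by rewrite muln_gt0 /= subn_gt0.
  rewrite -(leq_pmul2l HL) I1.
  apply: (leq_trans (leq_mul H (leqnn _))).
  by apply: leq_mul => //; rewrite /g; apply: leq_mul => //; apply: leq_sub2r.
have E1 : n.+2 - j = 0 by clear -Hj; lia.
by rewrite /p subSS E1 bin0n.
Qed.

Lemma Pup n r j : g n r < f n r -> j < r -> p n j <= p n j.+1.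
Proof.
move=> H Hj.
have HA := pup_arith H Hj.
have Hr : r.*2 < n.+2.
  move: H; rewrite /g /f; case: (ltnP r.*2 n.+2) => // Hc' H; have E : n.+2 - r.*2 = 0 by lia.
  by rewrite E muln0 in H.
have HL : 0 < j.+1 * (n.+3 - j) by rewrite muln_gt0 /= subn_gt0; clear -Hr Hj; lia.
rewrite -(leq_pmul2l HL) I1.
by apply: leq_mul.
Qed.

Definition T n k := c n k + (if k is i.+1 then p n i + c n i else 0).

Lemma modes n : exists rho i, [/\ is_mode (c n) rho, is_mode (T n) i, unimodal (T n) & (i = rho \/ i = rho.+1)].
Proof.
have [rho [Hr0 Hlt Hge]] := rho_exists n.
have Cd : forall j, rho <= j -> c n j.+1 <= c n j.
  by move=> j Hj; apply: Cdown; [lia | exact: Hge].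
have Tup : forall k, k < rho -> T n k < T n k.+1.
  case=> [|i] Hi.
    rewrite /T addn0; have := c_pos (Hlt 1 _); have := Cup (Hlt 0 Hr0); lia.
  rewrite /T.
  have H1 := Cup (Hlt i.+1 Hi).
  have H2 := Cup (Hlt i (ltnW Hi)).
  have H3 := @Pup n rho.-1 i (Hlt _ _) _.
  have : p n i <= p n i.+1 by apply: H3; lia.
  lia.
have Tdown : forall k, rho < k -> T n k.+1 <= T n k.
  case=> [|i] Hi //.
  rewrite /T.
  have H1 := Cd i.+1 (ltnW Hi).
  have H2 := Cd i Hi.
  have H3 := Pdown (Hge i Hi).
  lia.
have Hmc : is_mode (c n) rho.
  split; last exact: Cd.
  by case: rho Hr0 Hlt {Hge Cd Tup Tdown} => // r _ Hlt; apply: Cup; apply: Hlt.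
exists rho.
case: (leqP (T n rho.+1) (T n rho)) => HT.
  exists rho; split => //; last by left.
  - split; first by move: Hr0 Tup; clear; case: rho => // r _ Tup; apply: Tup.
    move=> j Hj; case: (eqVneq j rho) => [-> //|Hne]; apply: Tdown; lia.
  - exists rho; split; first by move=> i Hi; apply: ltnW; apply: Tup.
    move=> j Hj; case: (eqVneq j rho) => [-> //|Hne]; apply: Tdown; lia.
exists rho.+1; split => //; last by right.
exists rho.+1; split; last by move=> j Hj; apply: Tdown.
move=> j Hj; apply: ltnW; case: (eqVneq j rho) => [-> //|Hne]; apply: Tup; lia.
Qed.

Lemma is_mode_ext (a b : nat -> nat) i : a =1 b -> is_mode a i -> is_mode b i.
Proof. move=> E [H1 H2]; split; last by move=> j; rewrite -!E; apply: H2. by case: i H1 {H2} => [|j]; rewrite -!E. Qed.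

Lemma unimodal_ext (a b : nat -> nat) : a =1 b -> unimodal a -> unimodal b.
Proof. move=> E [k [H1 H2]]; exists k; split=> j; rewrite -!E; [exact: H1 | exact: H2]. Qed.

Theorem proposition3p2 (m : nat) (hm : 5 <= m) :
  unimodal (indep_coef (tadpole_adj m 2)) /\
  exists rho i : nat,
    is_mode (indep_coef (cycle_adj m)) rho /\
    is_mode (indep_coef (tadpole_adj m 2)) i /\
    (i = rho \/ i = rho.+1).
Proof.
case: m hm => [|[|[|n]]] hm //.
have Ec : forall k, c n k = indep_coef (cycle_adj n.+3) k.
  by move=> k; rewrite cyc_count cyc_formula Pc_closed; case: k => // j; rewrite Pc_closed.
have Et : forall k, T n k = indep_coef (tadpole_adj n.+3 2) k.
  by move=> k; rewrite tad_count tad_formula; case: k => [|j]; rewrite -!cyc_count -!Ec ?Pc_closed.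
have [rho [i [H1 H2 H3 H4]]] := modes n.
split; first exact: unimodal_ext H3.
exists rho, i; split; first exact: is_mode_ext H1.
by split; first exact: is_mode_ext H2.
Qed.
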